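(* Let $R$ be a $\lambda$-ring and let $x\in R$ be an element which is both even (of some finite degree) and odd (of some finite degree). Then $\lambda^i(x)$ is nilpotent for every $i\ge 1$ (in particular $x=\lambda^1(x)$ is nilpotent), and $\lambda_t(x)$ is a unit of the polynomial ring $R[t]$.
   Context: A $\lambda$-ring means a special $\lambda$-ring in the sense of SGA6: a commutative ring $R$ with operations $\lambda^n:R\to R$ ($n\ge0$), $\lambda^0=1$, $\lambda^1=\mathrm{id}$, such that $\lambda_t(x)=\sum_n\lambda^n(x)t^n$ satisfies $\lambda_t(x+y)=\lambda_t(x)\lambda_t(y)$ together with the universal polynomial identities for $\lambda^n(xy)$ and $\lambda^m(\lambda^n(x))$. Set $\sigma_t(x)=\sum_n\sigma^n(x)t^n=\lambda_{-t}(x)^{-1}$. An element $x$ is even of degree $n$ if $\lambda_t(x)$ is a polynomial of degree $n$, and odd of degree $n$ if $\sigma_t(x)$ is a polynomial of degree $n$. *)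

(* Defs.v *)
From HB Require Import structures.
From mathcomp Require Import all_boot all_order all_algebra.
Set Implicit Arguments. Unset Strict Implicit. Unset Printing Implicit Defensive.
Import Order.TTheory GRing.Theory Num.Theory.
Local Open Scope ring_scope.

(** Integer polynomials in N variables, as iterated univariate polynomials:
    mpoly 0 = int, mpoly N.+1 = {poly mpoly N}.  Variable k (k < N) is the
    indeterminate adjoined at stage k+1. *)
Fixpoint mpoly (N : nat) : comNzRingType :=
  if N is k.+1 then ({poly mpoly k} : comNzRingType) else (int : comNzRingType).

(** the variable xi_i in mpoly N (0 if i >= N) *)
Fixpoint mvar (N : nat) (i : nat) : mpoly N :=
  match N return mpoly N with
  | 0 => 0
  | k.+1 => (if i == k then 'X else (mvar k i)%:P : {poly mpoly k})
  end.

Fixpoint meval (R : comNzRingType) (N : nat) : mpoly N -> (nat -> R) -> R :=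
  match N return mpoly N -> (nat -> R) -> R with
  | 0 => fun p _ => (p : int)%:~R
  | k.+1 => fun p v =>
      \sum_(i < size (p : {poly mpoly k})) meval ((p : {poly mpoly k})`_i) v * v k ^+ i
  end.

Definition esym (N k : nat) : mpoly N :=
  \sum_(I : {set 'I_N} | #|I| == k) \prod_(i in I) mvar N i.

(** Universal polynomial for lambda^n(x y): in 2n variables, the variables
    0..n-1 stand for lambda^1 x .. lambda^n x and n..2n-1 for
    lambda^1 y .. lambda^n y.  P_n is characterised by
    P_n(e_1(xi),..,e_n(xi), e_1(eta),..,e_n(eta)) = e_n(xi_i eta_j), where
    xi_i = variable i, eta_j = variable n+j (i, j < n). *)
Definition prod_target (n : nat) : mpoly (n + n)%N :=
  \sum_(A : {set 'I_n * 'I_n} | #|A| == n)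
     \prod_(p in A) (mvar (n + n)%N p.1 * mvar (n + n)%N (n + p.2)%N).

Definition prod_subst (T : Type) (n : nat) (a b : nat -> T) (k : nat) : T :=
  if (k < n)%N then a k.+1 else b (k - n)%N.+1.

Definition esym_xi (n k : nat) : mpoly (n + n)%N :=
  \sum_(I : {set 'I_n} | #|I| == k) \prod_(i in I) mvar (n + n)%N i.
Definition esym_eta (n k : nat) : mpoly (n + n)%N :=
  \sum_(I : {set 'I_n} | #|I| == k) \prod_(i in I) mvar (n + n)%N (n + i)%N.

Definition is_P_prod (n : nat) (Q : mpoly (n + n)%N) : Prop :=
  meval Q (prod_subst n (esym_xi n) (esym_eta n)) = prod_target n.

(** Universal polynomial for lambda^m(lambda^n x): in mn variables
    standing for lambda^1 x, ..., lambda^(mn) x, characterised by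
    P_{m,n}(e_1(xi), ..., e_mn(xi)) = coefficient of t^m in
    prod_{|S| = n} (1 + xi^S t), xi = (xi_0, ..., xi_(mn-1)). *)
Definition comp_target (m n : nat) : mpoly (m * n)%N :=
  \sum_(A : {set {set 'I_(m * n)%N}} | (#|A| == m) && [forall S in A, #|S| == n])
     \prod_(S in A) \prod_(i in S) mvar (m * n)%N i.

Definition is_P_comp (m n : nat) (Q : mpoly (m * n)%N) : Prop :=
  meval Q (fun k => esym (m * n)%N k.+1) = comp_target m n.

(** Special lambda-ring structure (SGA6) on a commutative ring R given by
    operations lam n = lambda^n. *)
Record is_lambda_ring (R : comNzRingType) (lam : nat -> R -> R) : Prop := {
  lam0 : forall x, lam 0 x = 1;
  lam1 : forall x, lam 1 x = x;
  lam_add : forall n x y, lam n (x + y) = \sum_(i < n.+1) lam i x * lam (n - i)%N y;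
  lam_mul : forall n (Q : mpoly (n + n)%N), is_P_prod Q ->
      forall x y, lam n (x * y) =
        meval Q (prod_subst n (fun k => lam k x) (fun k => lam k y));
  lam_comp : forall m n (Q : mpoly (m * n)%N), is_P_comp Q ->
      forall x, lam m (lam n x) = meval Q (fun k => lam k.+1 x)
}.

(** sigma_t(x) = lambda_(-t)(x)^(-1): coefficients sigma^0..sigma^n, computed
    by sigma^0 = 1, sigma^k = sum_(i=1..k) (-1)^(i+1) lambda^i(x) sigma^(k-i). *)
Fixpoint sigma_seq (R : comNzRingType) (lam : nat -> R -> R) (x : R) (n : nat) : seq R :=
  if n is k.+1 then
    let s := sigma_seq lam x k in
    rcons s (\sum_(1 <= i < k.+2) (-1) ^+ i.+1 * lam i x * nth 0 s (k.+1 - i)%N)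
  else [:: 1].

Definition sigma (R : comNzRingType) (lam : nat -> R -> R) (n : nat) (x : R) : R :=
  nth 0 (sigma_seq lam x n) n.

(** x is even of degree n: lambda_t(x) is a polynomial of degree n *)
Definition is_even_deg (R : comNzRingType) (lam : nat -> R -> R) (x : R) (n : nat) :=
  lam n x != 0 /\ forall k, (n < k)%N -> lam k x = 0.

(** x is odd of degree n: sigma_t(x) is a polynomial of degree n *)
Definition is_odd_deg (R : comNzRingType) (lam : nat -> R -> R) (x : R) (n : nat) :=
  sigma lam n x != 0 /\ forall k, (n < k)%N -> sigma lam k x = 0.

Definition nilpotent (R : comNzRingType) (a : R) := exists k : nat, a ^+ k = 0.

Definition lambda_poly (R : comNzRingType) (lam : nat -> R -> R) (x : R) (n : nat)
  : {poly R} := \poly_(i < n.+1) lam i x.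

(* Main.v *)
Require Import Defs.
From HB Require Import structures.
From mathcomp Require Import all_boot all_order all_algebra.
Import GRing.Theory.
Local Open Scope ring_scope.

Lemma top_nil (R : comNzRingType) (A : {poly R}) k : (1 < size A)%N ->
  forall (B : {poly R}) (c : R), (size B <= k)%N -> A * B = c%:P ->
  lead_coef A ^+ k * c = 0.
Proof.
move=> hA; elim: k => [|k IH] B c hB hAB.
  move: hB; rewrite leqn0 size_poly_eq0 => /eqP hB0.
  move: hAB; rewrite hB0 mulr0 => /esym/eqP; rewrite polyC_eq0 => /eqP ->.
  by rewrite mulr0.
have hk : lead_coef A * B`_k = 0.
  have [hBk|hBk] := leqP (size B) k.
    by rewrite (leq_sizeP _ _ hBk) ?mulr0.
  have eB : size B = k.+1 by apply/eqP; rewrite eqn_leq hB hBk.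
  have -> : B`_k = lead_coef B by rewrite lead_coefE eB.
  rewrite mul_lead_coef hAB coefC eB.
  case: (size A) hA => [|[|s]] //= _.
  by rewrite addnS.
have hB' : (size (lead_coef A *: B) <= k)%N.
  apply/leq_sizeP => j hj; rewrite coefZ.
  move: hj; rewrite leq_eqVlt => /orP[/eqP <-|hj]; first exact: hk.
  by rewrite (leq_sizeP _ _ hB) ?mulr0.
have := IH _ (lead_coef A * c) hB'.
rewrite -scalerAr hAB -mul_polyC -polyCM => /(_ erefl).
by rewrite mulrA -exprSr.
Qed.

Lemma unit_nil_coefs (R : comNzRingType) N : forall (A B : {poly R}),
  (size A <= N)%N -> A * B = 1 -> forall i, (0 < i)%N -> nilpotent A`_i.
Proof.
elim: N => [|N IH] A B hA hAB i hi.
  by exists 1%N; rewrite expr1 (leq_sizeP _ _ hA).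
have [hA1|hA1] := leqP (size A) 1.
  by exists 1%N; rewrite expr1 (leq_sizeP _ _ hA1).
set a := lead_coef A.
have hak : a ^+ size B = 0.
  by have := @top_nil _ A (size B) hA1 B 1 (leqnn (size B)) (etrans hAB (esym (polyC1 _))); rewrite mulr1.
set d := (size A).-1.
set C := a%:P * 'X^d.
set A' := A - C.
have hA' : (size A' <= N)%N.
  have hd : (d <= N)%N by rewrite /d -ltnS prednK ?(ltn_trans _ hA1).
  apply: leq_trans hd.
  apply/leq_sizeP => j hj; rewrite /A' /C coefB coefCM coefXn.
  move: hj; rewrite leq_eqVlt => /orP[/eqP <-|hj].
    by rewrite eqxx mulr1 /a lead_coefE subrr.
  rewrite (gtn_eqF hj) mulr0 subr0.
  apply: (leq_sizeP _ _ (leqnn (size A))); move: hj; rewrite /d; by case: (size A).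
set u := C * B.
have huk : u ^+ size B = 0.
  by rewrite /u /C !exprMn -rmorphXn /= hak polyC0 !mul0r.
have hunit : A' * (B * \sum_(j < size B) u ^+ j) = 1.
  rewrite mulrA /A' mulrBl hAB -/u.
  have := subrX1 u (size B); rewrite huk sub0r => /(congr1 -%R).
  by rewrite opprK -mulNr opprB.
have := IH _ _ hA' hunit i hi.
have [eid|nid] := eqVneq i d.
  by move=> _; exists (size B); rewrite eid /d -lead_coefE.
have -> : A'`_i = A`_i by rewrite /A' /C coefB coefCM coefXn (negbTE nid) mulr0 subr0.
done.
Qed.

Lemma sigma_seq_size (R : comNzRingType) (lam : nat -> R -> R) x k :
  size (sigma_seq lam x k) = k.+1.
Proof. by elim: k => [|k IH] //=; rewrite size_rcons IH. Qed.

Lemma sigma_seq_nth (R : comNzRingType) (lam : nat -> R -> R) x k j :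
  (j <= k)%N -> nth 0 (sigma_seq lam x k) j = sigma lam j x.
Proof.
elim: k => [|k IH] hj.
  by move: hj; rewrite leqn0 => /eqP ->.
move: hj; rewrite leq_eqVlt => /orP[/eqP ->|hj]; first by [].
rewrite /= nth_rcons sigma_seq_size hj; exact: IH.
Qed.

Lemma sigma_rec (R : comNzRingType) (lam : nat -> R -> R) x k :
  sigma lam k.+1 x =
  \sum_(i < k.+1) (-1) ^+ i.+2 * lam i.+1 x * sigma lam (k - i)%N x.
Proof.
rewrite /sigma /= nth_rcons sigma_seq_size ltnn eqxx.
rewrite big_add1 /= big_mkord; apply: eq_bigr => i _.
by rewrite sigma_seq_nth // subSS leq_subr.
Qed.

Lemma sigma_conv (R : comNzRingType) (lam : nat -> R -> R) x k :
  lam 0%N x = 1 ->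
  \sum_(j < k.+2) (-1) ^+ j * lam j x * sigma lam (k.+1 - j)%N x = 0.
Proof.
move=> h0.
rewrite big_ord_recl /= expr0 h0 !mul1r subn0 sigma_rec -big_split /=.
apply: big1 => i _; rewrite /bump /= add1n subSS.
by rewrite !exprS !mulN1r opprK !mulNr subrr.
Qed.

Lemma sign_sq (R : comNzRingType) j : (-1) ^+ j * (-1) ^+ j = 1 :> R.
Proof. by rewrite -exprMn mulrNN mulr1 expr1n. Qed.

Theorem mainTheorem1 (R : comNzRingType) (lam : nat -> R -> R)
  (HR : is_lambda_ring lam) (x : R) (n m : nat)
  (Heven : is_even_deg lam x n) (Hodd : is_odd_deg lam x m) :
  (forall i : nat, (0 < i)%N -> nilpotent (lam i x)) /\
  (exists q : {poly R}, lambda_poly lam x n * q = 1).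
Proof.
case: Heven => _ hev; case: Hodd => _ hod.
have h0 : lam 0%N x = 1 by apply: (lam0 HR).
have cA : forall j, (lambda_poly lam x n)`_j = lam j x.
  move=> j; rewrite /lambda_poly coef_poly; case: ltnP => // hj.
  by rewrite hev.
set B := \poly_(i < m.+1) ((-1) ^+ i * sigma lam i x).
have cB : forall j, B`_j = (-1) ^+ j * sigma lam j x.
  move=> j; rewrite /B coef_poly; case: ltnP => // hj.
  by rewrite hod ?mulr0.
have hAB : lambda_poly lam x n * B = 1.
  apply/polyP => K; rewrite coefM coef1.
  case: K => [|k].
    by rewrite big_ord1 cA cB h0 expr0 !mul1r /sigma.
  rewrite /=; transitivity ((-1) ^+ k.+1 *
    \sum_(j < k.+2) (-1) ^+ j * lam j x * sigma lam (k.+1 - j)%N x);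
    last by rewrite (@sigma_conv R lam x k h0) mulr0.
  rewrite mulr_sumr; apply: eq_bigr => j _; rewrite cA cB.
  have hj : (j <= k.+1)%N by rewrite -ltnS.
  have -> : (-1) ^+ k.+1 = (-1) ^+ (k.+1 - j) * (-1) ^+ j :> R
    by rewrite -exprD subnK.
  rewrite !mulrA -(mulrA ((-1) ^+ (k.+1 - j))) sign_sq mulr1.
  by rewrite (mulrC (lam j x)).
split; last by exists B.
move=> i hi; have [hin|hin] := leqP i n.
  by rewrite -cA; exact: (@unit_nil_coefs R _ _ _ (leqnn _) hAB i hi).
by exists 1%N; rewrite expr1 hev.
Qed.
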